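(* If $X$ is a quasi-lattice (i.e., a $\upsilon$-quasi-lattice or a $\mu$-quasi-lattice), then $X_+$ is a proper and generating cone.
   Context: A pre-ordered Banach space is a real Banach space $X$ with a cone $X_+$ ($X_++X_+\subseteq X_+$, $\lambda X_+\subseteq X_+$ for $\lambda\ge0$; not assumed proper); $x\le y$ means $y-x\in X_+$. The cone is proper if $X_+\cap(-X_+)=\{0\}$ and generating if $X=X_+-X_+$. For $A\subseteq X$, $\upsilon(A)$ is the set of upper bounds of $A$ and $\mu(A)$ the set of minimal upper bounds ($z\in\upsilon(A)$ such that $A\le w\le z$ implies $w=z$). Let $\sigma_{x,y}(z)=\|z-x\|+\|z-y\|$. A pre-ordered Banach space with closed cone is a $\upsilon$-quasi-lattice if for all $x,y$, $\upsilon(\{x,y\})\neq\emptyset$ and there is a unique element of $\upsilon(\{x,y\})$ minimizing $\sigma_{x,y}$ on $\upsilon(\{x,y\})$; it is a $\mu$-quasi-lattice if for all $x,y$, $\mu(\{x,y\})\ne\emptyset$ and there is a unique element of $\mu(\{x,y\})$ minimizing $\sigma_{x,y}$ on $\mu(\{x,y\})$. *)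

(* Defs.v *)
From HB Require Import structures.
From mathcomp Require Import all_boot all_order all_algebra.
From mathcomp Require Import all_classical all_reals all_analysis.
Set Implicit Arguments. Unset Strict Implicit. Unset Printing Implicit Defensive.
Import Order.TTheory GRing.Theory Num.Theory.
Import numFieldNormedType.Exports.
Local Open Scope classical_set_scope.
Local Open Scope ring_scope.

Section PreorderedBanach.
Variables (R : realType) (X : completeNormedModType R).

Definition is_cone (C : set X) : Prop :=
  (forall x y, C x -> C y -> C (x + y)) /\
  (forall (l : R) x, 0 <= l -> C x -> C (l *: x)).

Definition cone_le (C : set X) (x y : X) : Prop := C (y - x).

Definition cone_proper (C : set X) : Prop :=
  forall x, C x -> C (- x) -> x = 0.

Definition cone_generating (C : set X) : Prop :=
  forall x, exists a b, C a /\ C b /\ x = a - b.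

Definition upper_bds (C : set X) (A : set X) : set X :=
  [set z | forall a, A a -> cone_le C a z].

Definition min_upper_bds (C : set X) (A : set X) : set X :=
  [set z | upper_bds C A z /\
           forall w, upper_bds C A w -> cone_le C w z -> w = z].

Definition sigma_xy (x y z : X) : R := `|z - x| + `|z - y|.

Definition unique_sigma_minimizer (x y : X) (S : set X) : Prop :=
  exists! z, S z /\ forall w, S w -> sigma_xy x y z <= sigma_xy x y w.

Definition upsilon_quasi_lattice (C : set X) : Prop :=
  is_cone C /\ closed C /\
  forall x y : X,
    upper_bds C [set x; y] !=set0 /\
    unique_sigma_minimizer x y (upper_bds C [set x; y]).

Definition mu_quasi_lattice (C : set X) : Prop :=
  is_cone C /\ closed C /\
  forall x y : X,
    min_upper_bds C [set x; y] !=set0 /\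
    unique_sigma_minimizer x y (min_upper_bds C [set x; y]).

End PreorderedBanach.

(* Main.v *)
Require Import Defs.
From HB Require Import structures.
From mathcomp Require Import all_boot all_order all_algebra.
From mathcomp Require Import all_classical all_reals all_analysis.
Import Order.TTheory GRing.Theory Num.Theory.
Import numFieldNormedType.Exports.
Local Open Scope classical_set_scope.
Local Open Scope ring_scope.

Theorem proposition5p7 (R : realType) (X : completeNormedModType R) (C : set X) :
  upsilon_quasi_lattice C \/ mu_quasi_lattice C ->
  cone_proper C /\ cone_generating C.
Proof.
have gen : (forall x y : X, upper_bds C [set x; y] !=set0) -> cone_generating C.
  move=> H x; have [z Hz] := H x 0.
  exists z, (z - x); split; first by have := Hz 0 (or_intror erefl); rewrite /cone_le subr0.
  split; first exact: (Hz x (or_introl erefl)).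
  by rewrite opprD opprK addrA subrr add0r.
case=> [[[Cadd Cscal] [_ H]]|[[Cadd Cscal] [_ H]]].
- split; last by apply: gen => x y; case: (H x y).
  move=> x Cx Cnx.
  have C0 : C 0 by have := Cscal 0 x (lexx _) Cx; rewrite scale0r.
  have [_ [z [[_ _] U]]] := H x (- x).
  have minz : forall w, upper_bds C [set x; - x] w ->
     sigma_xy x (- x) 0 <= sigma_xy x (- x) w.
    move=> w _; rewrite /sigma_xy !sub0r opprK normrN.
    have -> : `|x| + `|x| = `|(w + x) - (w - x)|.
      by rewrite opprB [(w + x) + _]addrC addrA subrK -mulr2n normrMn mulr2n.
    by rewrite ?opprK [`|w - x| + _]addrC ler_normB.
  have ub0 : upper_bds C [set x; - x] 0.
    by move=> a [->|->]; rewrite /cone_le ?sub0r ?opprK.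
  have ubx : upper_bds C [set x; - x] x.
    move=> a [->|->]; rewrite /cone_le ?subrr ?opprK //; exact: Cadd.
  have e0 : z = 0 by apply: U; split.
  have sx : sigma_xy x (- x) x = sigma_xy x (- x) 0.
    rewrite /sigma_xy subrr normr0 add0r sub0r ?opprK ?normrN.
    by rewrite add0r -mulr2n normrMn mulr2n.
  have ex : z = x.
    apply: U; split => // w Hw; rewrite sx; exact: minz.
  by rewrite -ex e0.
- split; last first.
    apply: gen => x y; have [[z [Hz _]] _] := H x y; by exists z.
  move=> x Cx Cnx.
  have [[z [Hz Hmin]] _] := H 0 0.
  have ub : upper_bds C [set 0; 0] (z + x).
    move=> a Ha; rewrite /cone_le addrAC; apply: Cadd => //; exact: Hz.
  have := Hmin (z + x) ub; rewrite /cone_le opprD addrA subrr sub0r => /(_ Cnx).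
  by move/(congr1 (fun t => t - z)); rewrite addrAC subrr add0r.
Qed.
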